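(* Let $\mathbbm k$ be an algebraically closed field, $n\ge1$ with $\mathrm{char}\,\mathbbm k\nmid 2n$, $a\in\mathbb Z/n$ with $a^2\equiv1\pmod n$, $m\in\mathbb Z/n$ with $(1-a)m\equiv0$, and $G=G_{n,a,m}$, acting trivially on $\mathbbm k^\times$. Let $d_\pm=\gcd(a\pm1,n)$. Then $$\mathrm H^2(G,\mathbbm k^\times)\cong\begin{cases}0&\text{if }d_-d_+=n\text{ or }G\text{ is non-split},\\ \mathbb Z/2&\text{if }d_-d_+=2n\text{ and }G\text{ is split}.\end{cases}$$ Consequently, for a stacky curve $\mathcal C$ over $\mathbbm k$, a doubly-twisted node with stabilizer $G$ contributes this group as a direct summand of $\mathrm H^2(\mathcal C,\mathbb G_m)$; in particular $\mathrm H^2([\operatorname{Spec}\mathbbm k[x,y]/(xy)\,/\,\mu_n\rtimes\mathbb Z/2],\mathbb G_m)=\mathbb Z/2$ when $d_-d_+=2n$ (e.g. $a=-1$).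
   Context: $G_{n,a,m}$ is the group generated by $t,\sigma$ with relations $t^n=1$, $\sigma t\sigma^{-1}=t^a$, $\sigma^2=t^m$ (an extension of $\mathbb Z/2$ by $\mu_n\cong\langle t\rangle$); $G$ is split if it is isomorphic to the semidirect product $\mu_n\rtimes\mathbb Z/2$ (equivalently $\gcd(a+1,n)\mid m$). The Brauer-type group of a stacky curve $\mathcal C$ (tame, proper, geometrically integral one-dimensional DM stack with trivial generic stabilizer over algebraically closed $\mathbbm k$) is $\mathrm H^2(\mathcal C,\mathbb G_m)=\bigoplus_i\mathrm H^2(G_i,\mathbbm k^\times)$ over the singular points $p_i$ of $\mathcal C_{\mathrm{red}}$ with geometric stabilizers $G_i$ acting trivially. A doubly-twisted node is a node étale locally of the form $[\operatorname{Spec}R/G]$ with $\mu_n\subset G$ acting by $(x,y)\mapsto(\zeta_nx,\zeta_n^ay)$ and elements outside $\mu_n$ interchanging the two branches of $xy=0$. *)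

(* Defs.v *)
From HB Require Import structures.
From mathcomp Require Import all_boot all_order all_algebra all_fingroup all_solvable.
Set Implicit Arguments. Unset Strict Implicit. Unset Printing Implicit Defensive.
Import GRing.Theory.
Local Open Scope ring_scope.
Local Open Scope group_scope.

Section Cohomology.
Variables (gT : finGroupType) (F : fieldType).

Definition cocycle2 (G : {set gT}) (f : gT -> gT -> F) : Prop :=
  (forall x y, x \in G -> y \in G -> f x y != 0%R) /\
  (forall x y z, x \in G -> y \in G -> z \in G ->
     (f y z * f x (y * z)%g = f (x * y)%g z * f x y)%R).

Definition coboundary2 (G : {set gT}) (f : gT -> gT -> F) : Prop :=
  exists c : gT -> F, (forall x, x \in G -> c x != 0%R) /\
    (forall x y, x \in G -> y \in G -> f x y = (c x * c y / c (x * y)%g)%R).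

Definition cohomologous (G : {set gT}) (f g : gT -> gT -> F) : Prop :=
  coboundary2 G (fun x y => (f x y / g x y)%R).

Definition H2_trivial (G : {set gT}) : Prop :=
  forall f, cocycle2 G f -> coboundary2 G f.

(* H^2(G, F^x) has exactly two elements, i.e. is isomorphic to Z/2. *)
Definition H2_is_Z2 (G : {set gT}) : Prop :=
  exists f0, [/\ cocycle2 G f0, ~ coboundary2 G f0 &
    forall f, cocycle2 G f -> coboundary2 G f \/ cohomologous G f f0].
End Cohomology.

(* G = <t, s> with #[t] = n, s t s^-1 = t^a, s^2 = t^m, #|G| = 2n:
   G is (isomorphic to) the group G_{n,a,m} given by the presentation. *)
Definition is_Gnam (gT : finGroupType) (G : {group gT}) (t s : gT) (n a m : nat) : Prop :=
  [/\ G :=: <<[set t; s]>>, #[t] = n, s * t * s^-1 = t ^+ a, s ^+ 2 = t ^+ m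
    & #|G| = (2 * n)%N].

(* Split: the extension 1 -> mu_n = <t> -> G -> Z/2 -> 1 splits, i.e.
   G is the semidirect product <t> >< Z/2. *)
Definition Gnam_split (gT : finGroupType) (G : {group gT}) (t : gT) : Prop :=
  exists H : {group gT}, <[t]> ><| H = G.

(* Main.v *)
Require Import Defs.
From HB Require Import structures.
From mathcomp Require Import all_boot all_order all_algebra all_fingroup all_solvable.
From mathcomp Require Import ring zify.
Set Implicit Arguments. Unset Strict Implicit. Unset Printing Implicit Defensive.
Import GRing.Theory.

Module NTm.

Section NT.
Variables (n a m : nat).
Hypothesis Hn : 0 < n.
Let b := a + n - 1.
Let dm := gcdn b n.
Let dp := gcdn (a + 1) n.
Let h := n %/ dm.

Lemma dm0 : 0 < dm.
Proof. by rewrite gcdn_gt0 Hn orbT. Qed.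

Lemma hdm : h * dm = n.
Proof. by rewrite divnK // dvdn_gcdr. Qed.

Lemma h0 : 0 < h.
Proof. by rewrite divn_gt0 ?dm0 // dvdn_leq // dvdn_gcdr. Qed.

Lemma NT1 x : n %| b * x -> h %| x.
Proof.
move=> H; have : n %| dm * x.
  by rewrite /dm muln_gcdl dvdn_gcd H dvdn_mulr.
by rewrite -{1}hdm mulnC dvdn_pmul2l ?dm0.
Qed.

Lemma NT3 : (a ^ 2 = 1 %[mod n]) -> n %| b * (a + 1).
Proof.
move=> Ha2; have E : b * (a + 1) + 1 = (a + 1) * n + a * a by rewrite /b; nia.
have : b * (a + 1) + 1 = 0 + 1 %[mod n].
  by rewrite E modnMDl mulnn Ha2 add0n.
by move/eqP; rewrite eqn_modDr mod0n.
Qed.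

Lemma NT4 : (a * m = m %[mod n]) -> n %| b * m.
Proof.
move=> Ham; have E : b * m + m = m * n + a * m by rewrite /b; nia.
have : b * m + m = 0 + m %[mod n] by rewrite E modnMDl Ham add0n.
by move/eqP; rewrite eqn_modDr mod0n.
Qed.

Lemma NT5 : gcdn dp dm %| 2.
Proof.
have g1 : gcdn dp dm %| a + 1 by apply: dvdn_trans (dvdn_gcdl _ _) (dvdn_gcdl _ _).
have g2 : gcdn dp dm %| b by apply: dvdn_trans (dvdn_gcdr _ _) (dvdn_gcdl _ _).
have g3 : gcdn dp dm %| n by apply: dvdn_trans (dvdn_gcdr _ _) (dvdn_gcdr _ _).
have E : b + 2 = (a + 1) + n by rewrite /b; lia.
by rewrite -(dvdn_addr 2 g2) E dvdn_add.
Qed.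

Lemma NT6 : dp %| 2 * h.
Proof.
have : dp %| h * gcdn dp dm.
  rewrite muln_gcdr dvdn_gcd dvdn_mull //= hdm dvdn_gcdr //.
move/dvdn_trans; apply; rewrite mulnC dvdn_pmul2r ?h0 //; exact: NT5.
Qed.

Lemma NT7 : (a ^ 2 = 1 %[mod n]) -> h %| dp.
Proof.
move=> Ha2; rewrite dvdn_gcd (NT1 (NT3 Ha2)) /= -hdm dvdn_mulr //.
Qed.

Lemma NT8 : (a * m = m %[mod n]) -> h %| m.
Proof. by move=> Ham; apply: NT1; apply: NT4. Qed.
End NT.

End NTm.
Import NTm.

Module Allm.
Local Open Scope group_scope.


Section Gs.
Variables (gT : finGroupType) (G : {group gT}) (t s : gT) (n a m : nat).
Hypothesis Hn : (0 < n)%N.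
Hypothesis HG : is_Gnam G t s n a m.

Lemma tG : t \in G.
Proof. by case: HG => -> *; apply: mem_gen; rewrite !inE eqxx. Qed.
Lemma sG : s \in G.
Proof. by case: HG => -> *; apply: mem_gen; rewrite !inE eqxx orbT. Qed.
Lemma ord_t : #[t] = n.
Proof. by case: HG. Qed.
Lemma tn : t ^+ n = 1.
Proof. by rewrite -ord_t expg_order. Qed.
Lemma s2 : s ^+ 2 = t ^+ m.
Proof. by case: HG. Qed.
Lemma st : s * t = t ^+ a * s.
Proof. by case: HG => _ _ <- *; rewrite mulgKV. Qed.
Lemma stj j : s * t ^+ j = t ^+ (a * j) * s.
Proof.
elim: j => [|j IH]; first by rewrite muln0 !expg0 mulg1 mul1g.
by rewrite expgSr mulgA IH -mulgA st mulgA -expgD mulnS addnC.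
Qed.
Lemma cardG : #|G| = (2 * n)%N.
Proof. by case: HG. Qed.

Lemma s_notin : s \notin <[t]>.
Proof.
apply/negP => sT.
have : G \subset <[t]>.
  by case: HG => -> *; rewrite gen_subG; apply/subsetP => x; rewrite !inE => /orP[]/eqP->; rewrite ?cycle_id.
move/subset_leq_card; rewrite cardG -orderE ord_t; apply/negP; rewrite -ltnNge.
by rewrite mul2n -addnn -{1}[n]addn0 ltn_add2l.
Qed.

Lemma tpow_inj i j : (i < n)%N -> (j < n)%N -> t ^+ i = t ^+ j -> i = j.
Proof.
move=> ilt jlt /eqP; rewrite eq_expg_mod_order ord_t !modn_small //; exact/eqP.
Qed.

Lemma dec_uniq i j e e' : (i < n)%N -> (j < n)%N -> (e < 2)%N -> (e' < 2)%N ->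
  t ^+ i * s ^+ e = t ^+ j * s ^+ e' -> i = j /\ e = e'.
Proof.
move=> ilt jlt elt e'lt.
have key : forall i j, t ^+ i = t ^+ j * s -> False.
  move=> i1 j1 H; move: s_notin; rewrite (_ : s = (t ^+ j1)^-1 * t ^+ i1).
    by rewrite groupM ?groupV ?mem_cycle.
  by rewrite H mulKg.
case: e elt => [|[|//]] _; case: e' e'lt => [|[|//]] _; rewrite ?expg0 ?expg1 ?mulg1.
- by move/(tpow_inj ilt jlt).
- by move/key.
- by move/esym/key.
- by move/mulIg/(tpow_inj ilt jlt).
Qed.

Definition phi (p : 'I_n * 'I_2) := t ^+ p.1 * s ^+ p.2.

Lemma dec_ex x : x \in G -> exists p : 'I_n * 'I_2, x = phi p.
Proof.
move=> xG.
have inj : injective phi.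
  move=> [i e] [j e'] /(dec_uniq (ltn_ord _) (ltn_ord _) (ltn_ord _) (ltn_ord _)) [h1 h2].
  by congr pair; apply: val_inj.
have sub : phi @: setT \subset G.
  by apply/subsetP => y /imsetP [p _ ->]; rewrite groupM ?groupX ?tG ?sG.
have crd : #|phi @: setT| = #|G|.
  by rewrite card_imset // cardsT card_prod !card_ord cardG mulnC.
have /imsetP [p _ ->] : x \in phi @: setT by rewrite ((subset_cardP crd) sub).
by exists p.
Qed.

Definition cdec x : option ('I_n * 'I_2) := [pick p | x == phi p].
Definition ci x := if cdec x is Some p then val p.1 else 0%N.
Definition ce x := if cdec x is Some p then val p.2 else 0%N.

Lemma canonP x : x \in G -> [/\ x = t ^+ ci x * s ^+ ce x, (ci x < n)%N & (ce x < 2)%N].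
Proof.
move=> /dec_ex [q xq]; rewrite /ci /ce /cdec; case: pickP => [p /eqP -> | /(_ q)].
  by split; rewrite ?ltn_ord.
by rewrite xq eqxx.
Qed.

Lemma canon_eq i e : (i < n)%N -> (e < 2)%N -> ci (t ^+ i * s ^+ e) = i /\ ce (t ^+ i * s ^+ e) = e.
Proof.
move=> ilt elt; have xG : t ^+ i * s ^+ e \in G by rewrite groupM ?groupX ?tG ?sG.
case: (canonP xG) => H ilt' elt'.
by case: (dec_uniq ilt' ilt elt' elt (esym H)).
Qed.

Lemma norm_form k l : t ^+ k * s ^+ l = t ^+ ((k + m * (l %/ 2)) %% n) * s ^+ (l %% 2).
Proof.
rewrite (expg_mod _ tn) expgD {1}(divn_eq l 2) expgD mulnC expgM s2 -expgM mulgA.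
done.
Qed.

Lemma canon_gen k l : ci (t ^+ k * s ^+ l) = ((k + m * (l %/ 2)) %% n)%N /\
   ce (t ^+ k * s ^+ l) = (l %% 2)%N.
Proof. by rewrite norm_form; apply: canon_eq; rewrite ltn_mod. Qed.

End Gs.

Local Close Scope group_scope.
Local Open Scope ring_scope.


Lemma exroot (K : closedFieldType) (N : nat) (c : K) : (0 < N)%N -> exists x : K, x ^+ N = c.
Proof.
move=> N0; have /closed_rootP [x /rootP] : size ('X^N - c%:P : {poly K}) != 1%N.
  by rewrite size_XnsubC // eqSS -lt0n.
by rewrite !hornerE => /eqP; rewrite subr_eq0 => /eqP; exists x.
Qed.

Lemma pair_eq (A B : Type) (X Y : A * B) : X.1 = Y.1 -> X.2 = Y.2 -> X = Y.
Proof. by case: X Y => ? ? [? ?] /= -> ->. Qed.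

Section Ext.
Variables (k : closedFieldType) (gT : finGroupType) (G : {group gT}) (f : gT -> gT -> k).
Hypothesis fnz : forall x y, x \in G -> y \in G -> f x y != 0.
Hypothesis fco : forall x y z, x \in G -> y \in G -> z \in G ->
  f y z * f x (y * z)%g = f (x * y)%g z * f x y.
Hypothesis f1l : forall x, x \in G -> f 1%g x = 1.
Hypothesis f1r : forall x, x \in G -> f x 1%g = 1.
Variables (t s : gT) (n a m : nat).
Hypothesis Hn : (0 < n)%N.
Hypothesis HG : is_Gnam G t s n a m.

Definition mulE (X Y : k * gT) : k * gT := (X.1 * Y.1 * f X.2 Y.2, (X.2 * Y.2)%g).
Definition scal (c : k) (X : k * gT) : k * gT := (c * X.1, X.2).
Definition oneE : k * gT := (1, 1%g).
Definition pw (X : k * gT) (i : nat) := iter i (fun Y => mulE Y X) oneE.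

Lemma mulEA X Y Z : X.2 \in G -> Y.2 \in G -> Z.2 \in G ->
  mulE (mulE X Y) Z = mulE X (mulE Y Z).
Proof.
move=> xG yG zG; rewrite /mulE /= mulgA; congr pair.
transitivity (X.1 * Y.1 * Z.1 * (f (X.2 * Y.2)%g Z.2 * f X.2 Y.2)); first by ring.
by rewrite -fco //; ring.
Qed.

Lemma mul1E X : X.2 \in G -> mulE oneE X = X.
Proof. by move=> xG; rewrite /mulE /= f1l // mul1g !mul1r mulr1; case: X xG. Qed.

Lemma mulE1 X : X.2 \in G -> mulE X oneE = X.
Proof. by move=> xG; rewrite /mulE /= f1r // mulg1 !mulr1; case: X xG. Qed.

Lemma scalE_l c X Y : mulE (scal c X) Y = scal c (mulE X Y).
Proof. by rewrite /mulE /scal /=; congr pair; ring. Qed.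

Lemma scalE_r c X Y : mulE X (scal c Y) = scal c (mulE X Y).
Proof. by rewrite /mulE /scal /=; congr pair; ring. Qed.

Lemma scalM c d X : scal c (scal d X) = scal (c * d) X.
Proof. by rewrite /scal /= mulrA. Qed.

Lemma scal1 X : scal 1 X = X.
Proof. by rewrite /scal mul1r; case: X. Qed.

Lemma pwS X i : pw X i.+1 = mulE (pw X i) X.
Proof. by []. Qed.

Lemma pw0 X : pw X 0 = oneE.
Proof. by []. Qed.

Lemma pw_snd X i : (pw X i).2 = (X.2 ^+ i)%g.
Proof. by elim: i => [|i IH] //=; rewrite IH expgSr. Qed.

Lemma pwG X i : X.2 \in G -> (pw X i).2 \in G.
Proof. by move=> xG; rewrite pw_snd groupX. Qed.

Lemma pw1 X : X.2 \in G -> pw X 1 = X.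
Proof. by move=> xG; rewrite pwS pw0 mul1E. Qed.

Lemma pwD X i j : X.2 \in G -> pw X (i + j) = mulE (pw X i) (pw X j).
Proof.
move=> xG; elim: j => [|j IH]; first by rewrite addn0 pw0 mulE1 ?pwG.
by rewrite addnS !pwS IH mulEA ?pwG.
Qed.

Lemma pwM X i j : X.2 \in G -> pw X (i * j) = pw (pw X i) j.
Proof.
move=> xG; elim: j => [|j IH]; first by rewrite muln0.
by rewrite mulnS addnC pwD // IH.
Qed.

Lemma pw_scal c X i : pw (scal c X) i = scal (c ^+ i) (pw X i).
Proof.
elim: i => [|i IH]; first by rewrite expr0 scal1.
by rewrite !pwS IH scalE_l scalE_r scalM exprSr.
Qed.

Lemma pw_one i : pw oneE i = oneE.
Proof. by elim: i => [|i IH] //; rewrite pwS IH mulE1 // group1. Qed.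

Lemma pw_mod X N i : X.2 \in G -> pw X N = oneE -> pw X i = pw X (i %% N).
Proof.
move=> xG Xn; rewrite {1}(divn_eq i N) pwD // mulnC pwM // Xn pw_one mul1E //.
exact: pwG.
Qed.

Lemma mulEG X Y : X.2 \in G -> Y.2 \in G -> (mulE X Y).2 \in G.
Proof. by move=> xG yG; rewrite groupM. Qed.
Ltac gG := solve [repeat (first [assumption | apply: mulEG | apply: pwG])].
#[local] Hint Extern 0 (is_true (_.2 \in _)) => gG : core.

Lemma mulE_nz X Y : X.2 \in G -> Y.2 \in G -> X.1 != 0 -> Y.1 != 0 -> (mulE X Y).1 != 0.
Proof. by move=> xG yG x0 y0; rewrite /= !mulf_neq0 ?fnz. Qed.

Lemma pw_nz X i : X.2 \in G -> X.1 != 0 -> (pw X i).1 != 0.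
Proof.
move=> xG x0; elim: i => [|i IH]; first by rewrite /= oner_neq0.
by rewrite pwS mulE_nz ?pwG.
Qed.

Lemma scal_cancel c X : scal c X = X -> X.1 != 0 -> c = 1.
Proof.
move=> H x0; have /= H1 := congr1 fst H; apply: (mulIf x0); by rewrite mul1r.
Qed.


Section Comm.
Variables (T S : k * gT) (w : k).
Hypotheses (TG : T.2 \in G) (SG : S.2 \in G).
Hypothesis HST : mulE S T = scal w (mulE (pw T a) S).

Lemma SpwT j : mulE S (pw T j) = scal (w ^+ j) (mulE (pw T (a * j)) S).
Proof.
elim: j => [|j IH].
  by rewrite muln0 expr0 scal1 pw0 mulE1 // mul1E.
rewrite pwS -mulEA ?pwG // IH scalE_l mulEA ?pwG // HST scalE_r scalM -exprSr.
by rewrite -mulEA ?pwG // -pwD // mulnS addnC.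
Qed.
End Comm.
Section ML.
Variables (al be : k).
Hypotheses (al0 : al != 0) (be0 : be != 0).
Let T := (al, t).
Let S := (be, s).
Let TG : T.2 \in G := tG HG.
Let SG : S.2 \in G := sG HG.
#[local] Hint Extern 0 (is_true (_.2 \in _)) => gG : core.
Hypothesis HTn : pw T n = oneE.
Hypothesis HST : mulE S T = mulE (pw T a) S.
Hypothesis HS2 : pw S 2 = pw T m.

Let HST' : mulE S T = scal 1 (mulE (pw T a) S).
Proof. by rewrite scal1. Qed.

Lemma SeT e j : mulE (pw S e) (pw T j) = mulE (pw T (a ^ e * j)) (pw S e).
Proof.
elim: e j => [|e IH] j.
  by rewrite expn0 mul1n pw0 mul1E ?pwG // mulE1 ?pwG.
rewrite [in LHS]pwS mulEA ?pwG // (SpwT TG SG HST') expr1n scal1.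
rewrite -mulEA ?pwG // IH mulEA ?pwG // -pwS.
by rewrite expnS mulnCA mulnA.
Qed.

Lemma prodform i e j e' :
  mulE (mulE (pw T i) (pw S e)) (mulE (pw T j) (pw S e')) =
  mulE (pw T (i + a ^ e * j)) (pw S (e + e')).
Proof.
rewrite mulEA // -[mulE (pw S e) (mulE _ _)]mulEA // SeT.
rewrite [mulE (mulE (pw T _) (pw S e)) _]mulEA // -pwD //.
by rewrite -mulEA // -pwD.
Qed.

Lemma WD kk l : mulE (pw T kk) (pw S l) =
  mulE (pw T ((kk + m * (l %/ 2)) %% n)) (pw S (l %% 2)).
Proof.
rewrite {1}(divn_eq l 2) pwD // mulnC pwM // HS2 -pwM // -mulEA // -pwD //.
by rewrite [pw T (kk + _)](pw_mod _ TG HTn).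
Qed.

Definition gam x := (mulE (pw T (ci t s n x)) (pw S (ce t s n x))).1.

Lemma gam_gen kk l : gam (t ^+ kk * s ^+ l)%g = (mulE (pw T kk) (pw S l)).1.
Proof. by rewrite /gam; case: (canon_gen Hn HG kk l) => -> ->; rewrite [in RHS]WD. Qed.

Lemma gam_mul x y : x \in G -> y \in G -> gam x * gam y * f x y = gam (x * y)%g.
Proof.
move=> xG yG; case: (canonP Hn HG xG) => ex _ _; case: (canonP Hn HG yG) => ey _ _.
set X := mulE (pw T (ci t s n x)) (pw S (ce t s n x)).
set Y := mulE (pw T (ci t s n y)) (pw S (ce t s n y)).
have X2 : X.2 = x by rewrite /= !pw_snd.
have Y2 : Y.2 = y by rewrite /= !pw_snd.
have -> : gam x * gam y * f x y = (mulE X Y).1.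
  by change (mulE X Y).1 with (X.1 * Y.1 * f X.2 Y.2); rewrite X2 Y2.
have Z2 : (mulE X Y).2 = (x * y)%g.
  by change (mulE X Y).2 with (X.2 * Y.2)%g; rewrite X2 Y2.
rewrite prodform in Z2 *; rewrite /= !pw_snd /= in Z2.
by rewrite -Z2 gam_gen.
Qed.

Lemma gam_nz x : x \in G -> gam x != 0.
Proof. by move=> xG; rewrite mulE_nz ?pwG ?pw_nz. Qed.

Lemma ML : coboundary2 G f.
Proof.
exists (fun x => (gam x)^-1); split.
  by move=> x xG; rewrite invr_eq0 gam_nz.
move=> x y xG yG; rewrite -gam_mul // invrK.
have := gam_nz xG; have := gam_nz yG => h1 h2.
by field; rewrite h1 h2.
Qed.
End ML.

Lemma scal_inj c d Z : scal c Z = scal d Z -> Z.1 != 0 -> c = d.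
Proof. by move=> H z0; have /= H1 := congr1 fst H; apply: (mulIf z0). Qed.

Lemma pw2 X : X.2 \in G -> pw X 2 = mulE X X.
Proof. by move=> xG; rewrite pwS pw1. Qed.

Section Wprop.
Hypothesis Ha2 : (a ^ 2 = 1 %[mod n])%N.
Hypothesis Ham : (a * m = m %[mod n])%N.
Variables (T S : k * gT) (w : k).
Hypotheses (T2 : T.2 = t) (S2 : S.2 = s) (T1 : T.1 != 0) (S1 : S.1 != 0).
Let TG : T.2 \in G. Proof. by rewrite T2 (tG HG). Qed.
Let SG : S.2 \in G. Proof. by rewrite S2 (sG HG). Qed.
Hypothesis HTn : pw T n = oneE.
Hypothesis HST : mulE S T = scal w (mulE (pw T a) S).

Let u := (pw S 2).1 / (pw T m).1.
Let HS2 : pw S 2 = scal u (pw T m).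
Proof.
apply: pair_eq; first by rewrite /= divfK // pw_nz.
by have : (pw S 2).2 = (pw T m).2 by rewrite !pw_snd T2 S2 (s2 HG).
Qed.
Let u0 : u != 0.
Proof. by rewrite /u mulf_neq0 ?invr_eq0 ?pw_nz. Qed.

Lemma w_n : w ^+ n = 1.
Proof.
have := SpwT TG SG HST n; rewrite HTn mulE1 // mulnC pwM // HTn pw_one mul1E //.
move/esym/scal_cancel; exact.
Qed.

Lemma w_m : w ^+ m = 1.
Proof.
have E : mulE S (pw S 2) = mulE (pw S 2) S by rewrite pw2 // mulEA.
rewrite HS2 scalE_r scalE_l (SpwT TG SG HST) scalM in E.
rewrite [pw T (a * m)](pw_mod _ TG HTn) Ham -(pw_mod _ TG HTn) in E.
have := scal_inj E; rewrite mulE_nz ?pw_nz // => /(_ isT) H.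
by apply: (mulfI u0); rewrite mulr1.
Qed.

Lemma w_a1 : w ^+ (a + 1) = 1.
Proof.
have E : mulE (pw S 2) T = mulE S (mulE S T) by rewrite pw2 // mulEA.
rewrite HS2 scalE_l -pwS HST scalE_r -mulEA // (SpwT TG SG HST) scalE_l scalM in E.
rewrite mulEA // -pw2 // HS2 scalE_r scalM -pwD // in E.
rewrite [pw T (a * a + m)](pw_mod _ TG HTn) in E.
rewrite [pw T m.+1](pw_mod _ TG HTn) in E.
have E2 : ((a * a + m) %% n = m.+1 %% n)%N.
  by rewrite -modnDml mulnn Ha2 modnDml addnC addn1.
rewrite E2 in E.
have := scal_inj E; rewrite pw_nz // => /(_ isT) H.
rewrite exprD expr1; apply: (mulIf u0); rewrite mul1r [in RHS]H; ring.
Qed.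
End Wprop.

Section Triv.
Variables (al be w : k).
Hypotheses (al0 : al != 0) (be0 : be != 0).
Let T := (al, t).
Let S := (be, s).
Let TG : T.2 \in G := tG HG.
Let SG : S.2 \in G := sG HG.
Hypothesis HTn : pw T n = oneE.
Hypothesis HST : mulE S T = scal w (mulE (pw T a) S).
Hypothesis Hw : w ^+ (n %/ gcdn (a + n - 1) n) = 1.

Lemma CaseTriv : coboundary2 G f.
Proof.
set b := (a + n - 1)%N; set d := gcdn b n; set h := (n %/ d)%N.
have d0 : (0 < d)%N by rewrite gcdn_gt0 Hn orbT.
have nd : (h * d = n)%N by rewrite divnK // dvdn_gcdr.
have [v vd] := exroot w d0.
have h0 : (0 < h)%N by rewrite divn_gt0 // dvdn_leq // dvdn_gcdr.
have w0 : w != 0.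
  apply/eqP => w0; move: Hw; rewrite -/b -/d -/h w0 expr0n gtn_eqF //= => /eqP.
  by rewrite eq_sym oner_eq0.
have v0 : v != 0 by apply: contraNneq w0 => v0; rewrite -vd v0 expr0n gtn_eqF.
have vn : v ^+ n = 1 by rewrite -nd mulnC exprM vd.
have [u _ /dvdnP [q Hq]] := Bezoutr b Hn.
set eta := (v ^+ u)^-1.
have eta0 : eta != 0 by rewrite invr_eq0 expf_neq0.
have etan : eta ^+ n = 1 by rewrite exprVn -exprM mulnC exprM vn expr1n invr1.
have etab : eta ^+ b = w.
  have : v ^+ (d + u * b) = 1 by rewrite Hq mulnC exprM vn expr1n.
  rewrite exprD vd exprM => H.
  have X0 : (v ^+ u) ^+ b != 0 by rewrite !expf_neq0.
  by rewrite /eta exprVn; apply: (mulIf X0); rewrite mulVf // H.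
have etaa : eta * w = eta ^+ a.
  have : (b + 1 = a + n)%N by rewrite /b addn1 subn1 prednK // addn_gt0 Hn orbT.
  by move=> E; rewrite -etab -exprS -addn1 E exprD etan mulr1.
pose T' := scal eta T.
have [c c2] := exroot ((pw T' m).1 / (pw S 2).1) (isT : (0 < 2)%N).
have c0 : c != 0.
  have : (pw T' m).1 / (pw S 2).1 != 0.
    by rewrite mulf_neq0 ?invr_eq0 ?pw_nz ?mulf_neq0.
  by rewrite -c2; apply: contraNneq => ->; rewrite expr0n.
pose S' := scal c S.
apply: (@ML (eta * al) (c * be)).
- by rewrite mulf_neq0.
- by rewrite mulf_neq0.
- by rewrite -/(scal eta T) pw_scal HTn etan scal1.
- rewrite -/(scal eta T) -/(scal c S) scalE_l scalE_r HST scalM pw_scal scalE_l scalM.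
  by rewrite scalE_r scalM -mulrA etaa mulrC.
- rewrite -/(scal eta T) -/(scal c S) pw_scal -/T'; apply: pair_eq; first by rewrite /= c2 divfK // pw_nz.
  by have : (pw S 2).2 = (pw T' m).2 by rewrite !pw_snd /= (s2 HG).
Qed.
End Triv.

Section Cobw.
Variables (al be w : k).
Hypotheses (al0 : al != 0) (be0 : be != 0).
Let T := (al, t).
Let S := (be, s).
Let TG : T.2 \in G := tG HG.
Let SG : S.2 \in G := sG HG.
Hypothesis HTn : pw T n = oneE.
Hypothesis HST : mulE S T = scal w (mulE (pw T a) S).
Hypothesis Hcob : coboundary2 G f.

Lemma cob_w : w ^+ (n %/ gcdn (a + n - 1) n) = 1.
Proof.
have [c [c0 cE]] := Hcob.
pose sg x := ((c x)^-1, x).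
have sgM x y : x \in G -> y \in G -> mulE (sg x) (sg y) = sg (x * y)%g.
  move=> xG yG; apply: pair_eq => //=; rewrite cE //.
  have := c0 _ xG; have := c0 _ yG; have := c0 _ (groupM xG yG) => h1 h2 h3.
  by field; rewrite h1 h2 h3.
have c1 : c 1%g = 1.
  have H := cE _ _ (group1 G) (group1 G).
  rewrite (f1l (group1 G)) mulg1 (mulfK (c0 _ (group1 G))) in H.
  by rewrite -H.
have sg1 : sg 1%g = oneE by rewrite /sg c1 invr1.
have sgpw i : pw (sg t) i = sg (t ^+ i)%g.
  elim: i => [|i IH]; first by rewrite expg0 sg1.
  by rewrite pwS IH sgM ?groupX ?(tG HG) // expgSr.
pose eta := (c t)^-1 / al.
have sgt : sg t = scal eta T by apply: pair_eq => //=; rewrite divfK.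
pose zeta := (c s)^-1 / be.
have sgs : sg s = scal zeta S by apply: pair_eq => //=; rewrite divfK.
have zeta0 : zeta != 0 by rewrite mulf_neq0 ?invr_eq0 ?c0 ?(sG HG).
have etan : eta ^+ n = 1.
  have := sgpw n; rewrite (tn HG) sg1 sgt pw_scal HTn => /(congr1 fst) /=.
  by rewrite mulr1.
have rel : mulE (sg s) (sg t) = mulE (pw (sg t) a) (sg s).
  by rewrite sgpw !sgM ?groupX ?(tG HG) ?(sG HG) // (st HG).
rewrite sgt sgs scalE_l scalE_r HST !scalM pw_scal scalE_l scalE_r scalM in rel.
have := scal_inj rel; rewrite mulE_nz ?pw_nz // => /(_ isT) H.
have etaa : eta * w = eta ^+ a.
  by apply: (mulfI zeta0); rewrite mulrA H mulrC.
set b := (a + n - 1)%N; set d := gcdn b n; set h := (n %/ d)%N.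
have nd : (h * d = n)%N by rewrite divnK // dvdn_gcdr.
have [b' Hb] : exists b', b = (b' * d)%N by apply/dvdnP; rewrite dvdn_gcdl.
have E : (b + 1 = a + n)%N by rewrite /b addn1 subn1 prednK // addn_gt0 Hn orbT.
have etah : eta ^+ (a * h) = eta ^+ h.
  have p1 : eta ^+ ((a + n) * h) = eta ^+ (a * h).
    by rewrite mulnDl exprD [eta ^+ (n * h)]exprM etan expr1n mulr1.
  have p2 : eta ^+ ((b + 1) * h) = eta ^+ h.
    by rewrite mulnDl mul1n exprD Hb -mulnA (mulnC d) nd mulnC exprM etan expr1n mul1r.
  by rewrite -p1 -E p2.
have eh0 : eta ^+ h != 0 by rewrite expf_neq0 // mulf_neq0 ?invr_eq0 ?c0 ?(tG HG).
by apply: (mulfI eh0); rewrite -exprMn etaa -exprM etah mulr1.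
Qed.
End Cobw.

Lemma setup : exists al w, [/\ al != 0, pw (al, t) n = oneE &
  mulE (1, s) (al, t) = scal w (mulE (pw (al, t) a) (1, s))].
Proof.
have TG : (1 : k, t).2 \in G := tG HG.
have SG : (1 : k, s).2 \in G := sG HG.
set z := (pw (1, t) n).1.
have z0 : z != 0 by rewrite pw_nz // oner_neq0.
have [al Hal] := exroot z^-1 Hn.
have al0 : al != 0.
  apply/eqP => al0; move: Hal; rewrite al0 expr0n gtn_eqF //= => /esym/eqP.
  by rewrite invr_eq0 (negbTE z0).
have T1 : (al, t) = scal al (1, t) by rewrite /scal mulr1.
exists al, ((mulE (1, s) (al, t)).1 / (mulE (pw (al, t) a) (1, s)).1); split => //.
  rewrite T1 pw_scal Hal; apply: pair_eq; first by rewrite /= mulVf.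
  by rewrite /= pw_snd /= (tn HG).
have nz : (mulE (pw (al, t) a) (1, s)).1 != 0 by rewrite mulE_nz ?pw_nz ?oner_neq0.
apply: pair_eq; first exact: (esym (divfK nz _)).
by rewrite /= pw_snd /= (st HG).
Qed.
End Ext.

End Allm.
Import Allm.

Module Splitm.

Section Gsplit.
Local Open Scope group_scope.
Variables (gT : finGroupType) (G : {group gT}) (t s : gT) (n a m : nat).
Hypothesis Hn : (0 < n)%N.
Hypothesis HG : is_Gnam G t s n a m.

Lemma tsub : <[t]> \subset G.
Proof. by rewrite cycle_subG (tG HG). Qed.

Lemma card_t : #|<[t]>| = n.
Proof. by rewrite -orderE (ord_t HG). Qed.

Lemma t_normal : <[t]> <| G.
Proof.
apply: index2_normal; first exact: tsub.
by rewrite -divgS ?tsub // (cardG HG) card_t mulnK.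
Qed.

Lemma tjs_sq j : (t ^+ j * s) ^+ 2 = t ^+ (j + a * j + m).
Proof.
rewrite expgS expg1 mulgA -[t ^+ j * s * t ^+ j]mulgA (stj HG) mulgA -expgD -mulgA.
have -> : s * s = s ^+ 2 by rewrite expgS expg1.
by rewrite (s2 HG) -expgD.
Qed.

Lemma split_dvd : Gnam_split G t -> (gcdn (a + 1) n %| m)%N.
Proof.
case=> H sd; have [_ mulG nH TI] := sdprodP sd.
have cH : #|H| = 2.
  have := sdprod_card sd; rewrite card_t (cardG HG) mulnC => /eqP.
  by rewrite eqn_pmul2r // => /eqP.
have : H :!=: 1 by rewrite trivg_card1 cH.
case/trivgPn => y yH y1.
have yG : y \in G by rewrite -mulG (subsetP (mulG_subr _ _)).
have yT : y \notin <[t]>.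
  apply: contra y1 => yT; have : y \in <[t]> :&: H by rewrite inE yT.
  by rewrite TI inE.
have y2 : y ^+ 2 = 1 by rewrite -cH expg_cardG.
case: (canonP Hn HG yG) => ey _; case: (ce t s n y) ey => [|[|//]] ey _.
  by move: yT; rewrite ey expg0 mulg1 mem_cycle.
rewrite ey expg1 tjs_sq in y2.
have := y2; move/eqP; rewrite -order_dvdn (ord_t HG) => ndv.
have dn : (gcdn (a + 1) n %| n)%N by apply: dvdn_gcdr.
have := dvdn_trans dn ndv.
have -> : (ci t s n y + a * ci t s n y + m = (a + 1) * ci t s n y + m)%N by ring.
by rewrite dvdn_addr // dvdn_mulr // dvdn_gcdl.
Qed.

Lemma dvd_split : (gcdn (a + 1) n %| m)%N -> Gnam_split G t.
Proof.
move=> /dvdnP [q Hq].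
have [u _ Hu] := Bezoutr (a + 1) Hn.
set y := t ^+ (u * q) * s.
have y2 : y ^+ 2 = 1.
  rewrite /y tjs_sq; apply/eqP; rewrite -order_dvdn (ord_t HG).
  have -> : (u * q + a * (u * q) + m = q * (gcdn (a + 1) n + u * (a + 1)))%N.
    by rewrite Hq; ring.
  exact: dvdn_mull.
have yG : y \in G by rewrite groupM ?groupX ?(tG HG) ?(sG HG).
have yT : y \notin <[t]>.
  apply: contra (s_notin Hn HG) => yT.
  by rewrite -(mulKg (t ^+ (u * q)) s) groupM ?groupV ?mem_cycle.
have y1 : y != 1 by apply: contra yT => /eqP ->; rewrite group1.
have oy : #[y] = 2.
  have : (#[y] %| 2)%N by rewrite order_dvdn y2.
  rewrite dvdn_divisors // inE /= => /orP[/eqP o1|/orP[/eqP //|//]].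
  by move/eqP: o1; rewrite order_eq1 (negbTE y1).
have TI : <[t]> :&: <[y]> = 1.
  rewrite setIC; apply: prime_TIg; first by rewrite -orderE oy.
  by rewrite cycle_subG.
have ny : <[y]> \subset 'N(<[t]>).
  by rewrite cycle_subG (subsetP (normal_norm t_normal)).
exists <[y]>%G; rewrite sdprodE //=.
apply/eqP; rewrite eqEcard mul_subG ?tsub ?cycle_subG //=.
by rewrite TI_cardMg // card_t -orderE oy (cardG HG) mulnC.
Qed.
End Gsplit.

End Splitm.
Import Splitm.

Module Normm.
Local Open Scope ring_scope.

Section Norm.
Variables (k : closedFieldType) (gT : finGroupType) (G : {group gT}).

Lemma norm_cocycle (f : gT -> gT -> k) : cocycle2 G f ->
  let fn := fun x y => f x y / f 1%g 1%g in
  [/\ forall x y, x \in G -> y \in G -> fn x y != 0,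
      forall x y z, x \in G -> y \in G -> z \in G ->
        fn y z * fn x (y * z)%g = fn (x * y)%g z * fn x y,
      forall x, x \in G -> fn 1%g x = 1 &
      forall x, x \in G -> fn x 1%g = 1].
Proof.
case=> fnz fco fn; have c0 : f 1%g 1%g != 0 by rewrite fnz ?group1.
split.
- by move=> x y xG yG; rewrite /fn mulf_neq0 ?invr_eq0 ?fnz.
- move=> x y z xG yG zG; rewrite /fn.
  transitivity (f y z * f x (y * z)%g / (f 1%g 1%g * f 1%g 1%g)); first by field.
  by rewrite fco //; field.
- move=> x xG; rewrite /fn; have := fco 1%g 1%g x (group1 G) (group1 G) xG.
  rewrite !mul1g => /(mulfI (fnz _ _ (group1 G) xG)) ->; exact: mulfV.
- move=> x xG; rewrite /fn; have := fco x 1%g 1%g xG (group1 G) (group1 G).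
  rewrite !mulg1 => /(mulIf (fnz _ _ xG (group1 G))) <-; exact: mulfV.
Qed.

Lemma cob_scale (h : gT -> gT -> k) (c : k) : c != 0 -> coboundary2 G h ->
  coboundary2 G (fun x y => c * h x y).
Proof.
move=> c0 [g [g0 gE]]; exists (fun x => c * g x); split.
  by move=> x xG; rewrite mulf_neq0 ?g0.
move=> x y xG yG; rewrite gE //.
have := g0 _ xG; have := g0 _ yG; have := g0 _ (groupM xG yG) => h1 h2 h3.
by field; rewrite c0 h1.
Qed.

Lemma cocycle_div (f f0 : gT -> gT -> k) :
  (forall x y, x \in G -> y \in G -> f x y != 0) ->
  (forall x y z, x \in G -> y \in G -> z \in G -> f y z * f x (y * z)%g = f (x * y)%g z * f x y) ->
  (forall x y, x \in G -> y \in G -> f0 x y != 0) ->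
  (forall x y z, x \in G -> y \in G -> z \in G -> f0 y z * f0 x (y * z)%g = f0 (x * y)%g z * f0 x y) ->
  (forall x y z, x \in G -> y \in G -> z \in G ->
    f y z / f0 y z * (f x (y * z)%g / f0 x (y * z)%g) =
    f (x * y)%g z / f0 (x * y)%g z * (f x y / f0 x y)).
Proof.
move=> fnz fco gnz gco x y z xG yG zG.
rewrite !mulf_div fco // gco //.
Qed.

Definition dv (X Y : k * gT) : k * gT := (X.1 / Y.1, X.2).

Lemma mulE_dv (f f0 : gT -> gT -> k) X Y X' Y' : X.2 = Y.2 -> X'.2 = Y'.2 ->
  mulE (fun x y => f x y / f0 x y) (dv X Y) (dv X' Y') = dv (mulE f X X') (mulE f0 Y Y').
Proof.
move=> e1 e2; apply: pair_eq => //=; rewrite -e1 -e2 !mulf_div //.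
Qed.

Lemma pw_dv (f f0 : gT -> gT -> k) X Y i : X.2 = Y.2 ->
  pw (fun x y => f x y / f0 x y) (dv X Y) i = dv (pw f X i) (pw f0 Y i).
Proof.
move=> e; elim: i => [|i IH]; first by rewrite /dv /= invr1 mulr1.
by rewrite !pwS IH mulE_dv // !pw_snd e.
Qed.

Lemma scal_dv c c' X Y : dv (scal c X) (scal c' Y) = scal (c / c') (dv X Y).
Proof. by apply: pair_eq => //=; rewrite invfM; ring. Qed.
End Norm.

End Normm.
Import Normm.

Module F0m.
Local Open Scope ring_scope.

Section F0.
Variables (k : closedFieldType) (gT : finGroupType) (G : {group gT}) (t s : gT) (n a m : nat).
Hypothesis Hn : (0 < n)%N.
Hypothesis HG : is_Gnam G t s n a m.
Variable om : k.
Hypotheses (omn : om ^+ n = 1) (oma : om ^+ (a + 1) = 1) (omm : om ^+ m = 1).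

Definition W x := om ^+ ci t s n x.
Definition f0 x y := if ce t s n x == 1%N then W y else 1.

Lemma om0 : om != 0.
Proof. by apply/eqP => o0; move: omn; rewrite o0 expr0n gtn_eqF //= => /eqP; rewrite eq_sym oner_eq0. Qed.

Lemma W_gen i l : W (t ^+ i * s ^+ l)%g = om ^+ i.
Proof.
rewrite /W (proj1 (canon_gen Hn HG i l)) (expr_mod _ omn) exprD exprM omm.
by rewrite expr1n mulr1.
Qed.

Lemma ce_gen i l : ce t s n (t ^+ i * s ^+ l)%g = (l %% 2)%N.
Proof. exact: (proj2 (canon_gen Hn HG i l)). Qed.

Lemma prod0 x y : x \in G -> y \in G -> ce t s n x = 0%N ->
  ce t s n (x * y)%g = ce t s n y /\ W (x * y)%g = W x * W y.
Proof.
move=> xG yG ex.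
case: (canonP Hn HG xG) => Ex _ _; case: (canonP Hn HG yG) => Ey _ ly.
have -> : (x * y = t ^+ (ci t s n x + ci t s n y) * s ^+ ce t s n y)%g.
  by rewrite {1}Ex {1}Ey ex expg0 mulg1 mulgA expgD.
by rewrite ce_gen modn_small // W_gen exprD.
Qed.

Lemma prod1 x y : x \in G -> y \in G -> ce t s n x = 1%N ->
  ce t s n (x * y)%g = ((1 + ce t s n y) %% 2)%N /\ W (x * y)%g * W y = W x.
Proof.
move=> xG yG ex.
case: (canonP Hn HG xG) => Ex _ _; case: (canonP Hn HG yG) => Ey _ ly.
have -> : (x * y = t ^+ (ci t s n x + a * ci t s n y) * s ^+ (1 + ce t s n y))%g.
  rewrite {1}Ex {1}Ey ex expg1 -mulgA [(s * _)%g]mulgA (stj HG) -!mulgA expgD.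
  by rewrite expgD expg1 !mulgA.
rewrite ce_gen W_gen /W; split => //.
rewrite -exprD.
have -> : (ci t s n x + a * ci t s n y + ci t s n y = ci t s n x + (a + 1) * ci t s n y)%N by ring.
by rewrite exprD exprM oma expr1n mulr1.
Qed.

Lemma ce_lt x : x \in G -> (ce t s n x < 2)%N.
Proof. by case/(canonP Hn HG). Qed.

Lemma f0_nz x y : x \in G -> y \in G -> f0 x y != 0.
Proof. by move=> _ _; rewrite /f0; case: ifP => _; rewrite ?oner_neq0 // /W expf_neq0 // om0. Qed.

Lemma f0_co x y z : x \in G -> y \in G -> z \in G ->
  f0 y z * f0 x (y * z)%g = f0 (x * y)%g z * f0 x y.
Proof.
move=> xG yG zG; rewrite /f0.
have := ce_lt xG; have := ce_lt yG.
case Ey : (ce t s n y) => [|[|//]] _; case Ex : (ce t s n x) => [|[|//]] _ /=.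
- by have [-> _] := prod0 xG yG Ex; rewrite Ey.
- have [-> _] := prod1 xG yG Ex; rewrite Ey /=.
  by have [_ ->] := prod0 yG zG Ey; rewrite mul1r mulrC.
- by have [-> _] := prod0 xG yG Ex; rewrite Ey.
- have [-> _] := prod1 xG yG Ex; rewrite Ey /=.
  by have [_ <-] := prod1 yG zG Ey; rewrite mul1r mulrC.
Qed.

Lemma ce1 : ce t s n 1%g = 0%N.
Proof. by have := ce_gen 0 0; rewrite !expg0 mulg1. Qed.

Lemma f0_1l x : x \in G -> f0 1%g x = 1.
Proof. by rewrite /f0 ce1. Qed.

Lemma f0_1r x : x \in G -> f0 x 1%g = 1.
Proof.
have W1 : W 1%g = 1 by have := W_gen 0 0; rewrite !expg0 mulg1 expr0.
by move=> _; rewrite /f0 W1; case: ifP.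
Qed.

Lemma ce_t i : ce t s n (t ^+ i)%g = 0%N.
Proof. by have := ce_gen i 0; rewrite expg0 mulg1. Qed.
Lemma ce_s : ce t s n s = 1%N.
Proof. by have := ce_gen 0 1; rewrite expg0 mul1g expg1. Qed.
Lemma W_t : W t = om.
Proof. by have := W_gen 1 0; rewrite expg0 mulg1 !expg1 expr1. Qed.

Lemma pwT0 i : pw f0 (1, t) i = (1, (t ^+ i)%g).
Proof.
elim: i => [|i IH] //; rewrite pwS IH; apply: pair_eq; last by rewrite /= expgSr.
by rewrite /= /f0 ce_t !mulr1.
Qed.

Lemma HST0 : mulE f0 (1, s) (1, t) = scal om (mulE f0 (pw f0 (1, t) a) (1, s)).
Proof.
rewrite pwT0; apply: pair_eq; last by rewrite /= (st HG).
by rewrite /= /f0 ce_s ce_t W_t /= !mul1r !mulr1.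
Qed.
End F0.

End F0m.
Import F0m.

Module Finm.
Section Fin.
Local Open Scope ring_scope.
Variables (k : closedFieldType) (gT : finGroupType) (G : {group gT}).

Lemma cob_ext (h1 h2 : gT -> gT -> k) :
  (forall x y, x \in G -> y \in G -> h1 x y = h2 x y) -> coboundary2 G h1 -> coboundary2 G h2.
Proof. by move=> E [c [c0 cE]]; exists c; split => // x y xG yG; rewrite -E // cE. Qed.

Lemma cob_unscale (h : gT -> gT -> k) c : c != 0 ->
  coboundary2 G (fun x y => h x y / c) -> coboundary2 G h.
Proof.
move=> c0 [g [g0 gE]]; exists (fun x => c * g x); split.
  by move=> x xG; rewrite mulf_neq0 ?g0.
move=> x y xG yG; have := gE x y xG yG.
have := g0 _ xG; have := g0 _ yG; have := g0 _ (groupM xG yG) => h1 h2 h3 E.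
rewrite -(divfK c0 (h x y)) E; field; by rewrite c0 h1.
Qed.

Lemma expo (w : k) (dp h m : nat) : (0 < h)%N -> w ^+ dp = 1 -> w ^+ m = 1 ->
  (h %| m)%N -> (h %| dp)%N -> (dp %| 2 * h)%N -> ~~ (dp %| m)%N -> w ^+ h = 1.
Proof.
move=> h0 wdp wm /dvdnP [q Hq] /dvdnP [r Er] d2 ndm; subst m.
have r2 : (r %| 2)%N by move: d2; rewrite Er dvdn_pmul2r.
move: r2; rewrite dvdn_divisors // inE /= => /orP[/eqP r1|/orP[/eqP r2|//]].
  by move: wdp; rewrite Er r1 mul1n.
have w2h : w ^+ (2 * h)%N = 1 by rewrite -r2 -Er.
have ndm' : ~~ (2 * h %| q * h)%N by rewrite -r2 -Er.
case/boolP: (odd q) => oq; last first.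
  by move: ndm'; rewrite dvdn_pmul2r // dvdn2 oq.
move: wm; rewrite -(odd_double_half q) oq -muln2 mulnDl mul1n exprD -mulnA.
by rewrite [(q./2 * _)%N]mulnC exprM w2h expr1n mulr1.
Qed.

Lemma w_dp (w : k) n a : (0 < n)%N -> w ^+ n = 1 -> w ^+ (a + 1) = 1 ->
  w ^+ (gcdn (a + 1) n) = 1.
Proof.
move=> Hn wn wa; have [u _ /dvdnP [q Hq]] := Bezoutr (a + 1) Hn.
have : w ^+ (gcdn (a + 1) n + u * (a + 1)) = 1 by rewrite Hq mulnC exprM wn expr1n.
by rewrite exprD mulnC exprM wa expr1n mulr1.
Qed.
End Fin.
End Finm.
Import Finm.

Local Open Scope group_scope.

Theorem proposition4p13 (k : closedFieldType) (gT : finGroupType) (G : {group gT})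
    (t s : gT) (n a m : nat) :
  (0 < n)%N ->
  (forall p : nat, p \in [pchar k]%R -> ~~ (p %| 2 * n))%N ->
  (a < n)%N -> (m < n)%N ->
  (a ^ 2 = 1 %[mod n])%N ->
  (a * m = m %[mod n])%N ->
  is_Gnam G t s n a m ->
  let d_minus := gcdn (a + n - 1) n in
  let d_plus := gcdn (a + 1) n in
  ((d_minus * d_plus = n)%N \/ ~ Gnam_split G t -> H2_trivial k G) /\
  ((d_minus * d_plus = 2 * n)%N /\ Gnam_split G t -> H2_is_Z2 k G).
Proof.
Local Open Scope ring_scope.
move=> Hn Hchar _ _ Ha2 Ham HG dm dp.
set h := (n %/ dm)%N.
have h0 : (0 < h)%N := h0 a Hn.
have hdm : (h * dm = n)%N := hdm n a.
have dm0 : (0 < dm)%N := dm0 a Hn.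
have Hgen : forall f : gT -> gT -> k, cocycle2 G f ->
  let fn := fun x y => (f x y / f 1%g 1%g)%R in
  exists al w, [/\ al != 0%R, pw fn (al, t) n = oneE k gT,
     mulE fn (1%R, s) (al, t) = scal w (mulE fn (pw fn (al, t) a) (1%R, s)),
     (w ^+ dp = 1)%R & (w ^+ m = 1)%R /\ ((w ^+ h = 1)%R -> coboundary2 G f)].
  move=> f Hf fn; have [fnz fco f1l f1r] := norm_cocycle Hf.
  have [al [w [al0 HTn HST]]] := setup fnz Hn HG.
  have wn := w_n fco f1l f1r HG (T := (al, t)) (S := (1%R, s)) erefl erefl (oner_neq0 _) HTn HST.
  have wa := w_a1 fnz fco f1l f1r HG Ha2 (T := (al, t)) (S := (1%R, s)) erefl erefl al0 (oner_neq0 _) HTn HST.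
  have wm := w_m fnz fco f1l f1r HG Ham (T := (al, t)) (S := (1%R, s)) erefl erefl al0 (oner_neq0 _) HTn HST.
  exists al, w; split => //; first exact: w_dp.
  split => // Hw; apply: (cob_unscale (c := f 1%g 1%g)).
    by case: Hf => fz _; rewrite fz ?group1.
  exact: (CaseTriv fnz fco f1l f1r Hn HG al0 (oner_neq0 _) HTn HST Hw).
split.
  move=> Hcase f Hf; have [al [w [al0 HTn HST wdp [wm cobf]]]] := Hgen f Hf.
  apply: cobf; case: Hcase => [Hprod | Hns].
    have -> : h = dp.
      by apply/eqP; rewrite -(eqn_pmul2l dm0) Hprod mulnC hdm.
    exact: wdp.
  apply: (expo h0 wdp wm (NT8 Hn Ham) (NT7 Hn Ha2) (NT6 a Hn)).
  by apply/negP => dvd; apply: Hns; exact: dvd_split Hn HG dvd.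
case=> Hprod Hsplit.
have dpm : (dp %| m)%N := split_dvd Hn HG Hsplit.
have dp2h : dp = (2 * h)%N.
  by apply/eqP; rewrite -(eqn_pmul2l dm0) Hprod mulnCA (mulnC dm) hdm.
have two0 : (2%:R : k)%R != 0%R.
  apply/eqP => H; have := Hchar 2%N; rewrite inE /= H eqxx /= => /(_ isT).
  by rewrite dvdn_mulr.
have m1 : (-1 : k) != 1%R.
  apply/eqP => H; move: two0; rewrite -[2%N]/(1 + 1)%N GRing.natrD -{1}H GRing.addNr eqxx.
  done.
have [om omh] := exroot (-1 : k) h0.
have omdp : (om ^+ dp = 1)%R by rewrite dp2h mulnC exprM omh sqrrN expr1n.
have omdv : forall q, (dp %| q)%N -> (om ^+ q = 1)%R.
  by move=> q /dvdnP [r ->]; rewrite mulnC exprM omdp expr1n.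
have omn : (om ^+ n = 1)%R by apply: omdv; apply: dvdn_gcdr.
have oma : (om ^+ (a + 1) = 1)%R by apply: omdv; apply: dvdn_gcdl.
have omm : (om ^+ m = 1)%R by apply: omdv.
pose F0 := f0 t s n om.
have F0nz : forall x y, x \in G -> y \in G -> F0 x y != 0%R by move=> x y; apply: f0_nz.
have F0co := f0_co Hn HG omn oma omm.
have F0l := f0_1l Hn HG om.
have F0r := f0_1r Hn HG omn omm.
have HTn0 : pw F0 (1%R, t) n = oneE k gT by rewrite (pwT0 Hn HG) (tn HG).
have HST0' := HST0 Hn HG omn omm.
exists F0; split.
- by split; [exact: F0nz | exact: F0co].
- move=> Hc.
  have := cob_w F0nz F0l Hn HG (oner_neq0 _) (oner_neq0 _) HTn0 HST0' Hc.
  by rewrite -/dm -/h omh; apply/eqP.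
move=> f Hf; have [al [w [al0 HTn HST wdp [wm cobf]]]] := Hgen f Hf.
have : ((w ^+ h) ^+ 2 == 1)%R by rewrite -exprM mulnC -dp2h wdp.
rewrite sqrf_eq1 => /orP[/eqP wh1 | /eqP whm1]; first by left; apply: cobf.
right.
have [fnz fco f1l f1r] := norm_cocycle Hf.
set fn := fun x y => (f x y / f 1%g 1%g)%R in fnz fco f1l f1r HTn HST.
pose g := fun x y => (fn x y / F0 x y)%R.
have gnz : forall x y, x \in G -> y \in G -> g x y != 0%R.
  by move=> x y xG yG; rewrite mulf_neq0 ?invr_eq0 ?fnz ?F0nz.
have gco := cocycle_div fnz fco F0nz F0co.
have gl : forall x, x \in G -> g 1%g x = 1%R by move=> x xG; rewrite /g /fn /F0 /= f1l // F0l // divr1.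
have gr : forall x, x \in G -> g x 1%g = 1%R by move=> x xG; rewrite /g /fn /F0 /= f1r // F0r // divr1.
have HTg : pw g (dv (al, t) (1%R, t)) n = oneE k gT.
  by rewrite pw_dv // HTn HTn0; apply: pair_eq => //=; rewrite invr1 mulr1.
have HSTg : mulE g (dv (1%R, s) (1%R, s)) (dv (al, t) (1%R, t)) =
    scal (w / om) (mulE g (pw g (dv (al, t) (1%R, t)) a) (dv (1%R, s) (1%R, s))).
  rewrite mulE_dv // HST HST0' scal_dv pw_dv // mulE_dv //.
  by rewrite !pw_snd.
have om0 : om != 0%R.
  by apply/eqP => o0; move: omh; rewrite o0 expr0n gtn_eqF //= => /eqP; rewrite eq_sym oppr_eq0 oner_eq0.
have Hw : ((w / om) ^+ h = 1)%R by rewrite expr_div_n whm1 omh divff // oppr_eq0 oner_neq0.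
have cg : coboundary2 G g.
  have al1 : (al / 1 != 0)%R by rewrite divr1.
  have b1 : (1 / 1 != 0 :> k)%R by rewrite divr1 oner_neq0.
  exact: (CaseTriv gnz gco gl gr Hn HG al1 b1 HTg HSTg Hw).
rewrite /cohomologous; apply: (cob_unscale (c := f 1%g 1%g)).
  by case: Hf => fz _; rewrite fz ?group1.
apply: cob_ext cg => x y xG yG; rewrite /g /fn /F0; by rewrite mulrAC.
Qed.
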